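(* Let $n\ge 2$ and let $c:E_n\to\mathbb{C}$ be an admissible edge weighting of $Q_n$. Let $x_1,x_2,y_1,y_2$ be vertices of $Q_n$ inducing a $4$-cycle with edges $e=\{x_1,y_1\}$, $f=\{y_1,x_2\}$, $g=\{x_2,y_2\}$, $h=\{y_2,x_1\}$. (1) If $c(e)\ne0$ and $c(f)\ne0$, then also $c(g)\neq 0$ and $c(h)\ne0$, and $\frac{c(e)}{c(f)} = -\overline{\left(\frac{c(g)}{c(h)}\right)}$. (2) In that case, $|c(e)|=|c(g)|$ and $|c(f)|=|c(h)|$. (3) The subgraph $Q_n(c)\subset Q_n$ is a disjoint union of sub-hypercubes.
   Context: For $n\ge1$, identify integers $0\le i<2^n$ with their $n$-digit binary representations; $i\#k$ is $i$ with its $k$-th digit flipped. The hypercube $Q_n$ has vertex classes $U_n$ (even number of $1$'s) and $V_n$ (odd number of $1$'s), with edge set $E_n$ consisting of pairs $ij$, $i\in U_n$, $j\in V_n$, $j = i\#k$ for some $k<n$; $\mathcal{N}(x)$ is the set of neighbors of $x$. For $c:E_n\to\mathbb{C}$, $Q_n(c)=(U_n(c),V_n(c),E_n(c))$ is the subgraph consisting of the edges $ij$ with $c(ij)\ne0$ and their endpoints. $c$ is admissible if $\sum_{i\in\mathcal{N}(j_1)\cap\mathcal{N}(j_2)} c(ij_1)\overline{c(ij_2)} = \delta_{j_1j_2}$ for all $j_1,j_2\in V_n(c)$ and $\sum_{j\in\mathcal{N}(i_1)\cap\mathcal{N}(i_2)} c(i_1j)\overline{c(i_2j)} = \delta_{i_1i_2}$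 for all $i_1,i_2\in U_n(c)$. A sub-hypercube of $Q_n$ is, for a set $K\subseteq\{0,\dots,n-1\}$ and a vertex $a$, the subgraph induced by all vertices agreeing with $a$ in every binary digit outside $K$. *)

(* Defs.v *)
(* Complex numbers are modelled by an arbitrary
   numClosedFieldType C (this includes the complex numbers R[i] of
   mathcomp-real-closed); conjugation is x^*, modulus `|x|. *)
From HB Require Import structures.
From mathcomp Require Import all_boot all_order all_algebra.
Set Implicit Arguments. Unset Strict Implicit. Unset Printing Implicit Defensive.
Import Order.TTheory GRing.Theory Num.Theory.
Local Open Scope ring_scope.

Definition vtx (n : nat) := {ffun 'I_n -> bool}.

Definition flip n (x : vtx n) (k : 'I_n) : vtx n :=
  [ffun m => if m == k then ~~ x m else x m].

Definition ones n (x : vtx n) : nat := #|[set k | x k]|.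

Definition evenv n (x : vtx n) : bool := ~~ odd (ones x).
Definition oddv n (x : vtx n) : bool := odd (ones x).

Definition adj n (x y : vtx n) : bool := [exists k, y == flip x k].

(* An edge weighting c : E_n -> C is represented by c : vtx n -> vtx n -> C,
   where c i j is the weight of the edge ij with i in U_n, j in V_n, j adjacent
   to i. Values of c off E_n are irrelevant and never used. *)

Definition Uc n (C : numClosedFieldType) (c : vtx n -> vtx n -> C) (i : vtx n) : Prop :=
  evenv i /\ exists j, [/\ oddv j, adj i j & c i j != 0].
Definition Vc n (C : numClosedFieldType) (c : vtx n -> vtx n -> C) (j : vtx n) : Prop :=
  oddv j /\ exists i, [/\ evenv i, adj i j & c i j != 0].

Definition admissible n (C : numClosedFieldType) (c : vtx n -> vtx n -> C) : Prop :=
  (forall j1 j2, Vc c j1 -> Vc c j2 ->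
     \sum_(i : vtx n | adj i j1 && adj i j2) c i j1 * (c i j2)^* = (j1 == j2)%:R)
  /\
  (forall i1 i2, Uc c i1 -> Uc c i2 ->
     \sum_(j : vtx n | adj i1 j && adj i2 j) c i1 j * (c i2 j)^* = (i1 == i2)%:R).

Definition cw n (C : numClosedFieldType) (c : vtx n -> vtx n -> C) (x y : vtx n) : C :=
  if evenv x then c x y else c y x.

Definition subcube n (K : {set 'I_n}) (a : vtx n) : {set vtx n} :=
  [set v : vtx n | [forall k : 'I_n, (k \notin K) ==> (v k == a k)]].

Definition is_subcube n (B : {set vtx n}) : Prop :=
  exists K a, B = subcube K a.

(* Q_n(c) is a disjoint union of sub-hypercubes: there is a family of
   pairwise disjoint sub-hypercubes whose vertices are exactly the vertices
   of Q_n(c) and whose (induced) edges are exactly the edges of Q_n(c). *)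
Definition disjoint_union_of_subcubes n (C : numClosedFieldType)
  (c : vtx n -> vtx n -> C) : Prop :=
  exists P : {set {set vtx n}},
    [/\ forall B, B \in P -> is_subcube B,
        trivIset P,
        (forall x, (Uc c x \/ Vc c x) <-> x \in cover P) &
        (forall i j, evenv i -> adj i j ->
           (c i j != 0 <-> exists2 B, B \in P & (i \in B) && (j \in B)))].

(* Main.v *)
Require Import Defs.
From HB Require Import structures.
From mathcomp Require Import all_boot all_order all_algebra.
Set Implicit Arguments. Unset Strict Implicit. Unset Printing Implicit Defensive.
Import Order.TTheory GRing.Theory Num.Theory.
Local Open Scope ring_scope.

Section Basics.
Variable n : nat.
Implicit Types x y : vtx n.

Lemma flipE x k m : flip x k m = if m == k then ~~ x m else x m.
Proof. by rewrite ffunE. Qed.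

Lemma flipK x k : flip (flip x k) k = x.
Proof. by apply/ffunP => m; rewrite !flipE; case: eqP => // ->; rewrite negbK. Qed.

Lemma flipC x a b : flip (flip x a) b = flip (flip x b) a.
Proof.
by apply/ffunP => m; rewrite !flipE; case: (m == a); case: (m == b).
Qed.

Lemma flip_at x k : flip x k k = ~~ x k.
Proof. by rewrite flipE eqxx. Qed.

Lemma flip_off x k m : m != k -> flip x k m = x m.
Proof. by rewrite flipE => /negbTE ->. Qed.

Lemma flip_neq x k : flip x k != x.
Proof. by apply/eqP => /ffunP /(_ k); rewrite flip_at; case: (x k). Qed.

Lemma flip_inj x a b : flip x a = flip x b -> a = b.
Proof.
move=> /ffunP /(_ a); rewrite flip_at flipE; case: eqP => // _; case: (x a) => //.
Qed.

Lemma adjP x y : reflect (exists k, y = flip x k) (adj x y).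
Proof. by apply: (iffP existsP) => -[k hk]; exists k; apply/eqP. Qed.

Lemma adj_flip x k : adj x (flip x k).
Proof. by apply/adjP; exists k. Qed.

Lemma adj_sym x y : adj x y = adj y x.
Proof.
by apply/adjP/adjP => -[k ->]; exists k; rewrite flipK.
Qed.

Lemma oddv_flip x k : oddv (flip x k) = ~~ oddv x.
Proof.
rewrite /oddv /ones (cardsD1 k [set m | x m]) (cardsD1 k [set m | flip x k m]).
have -> : [set m | flip x k m] :\ k = [set m | x m] :\ k.
  by apply/setP => m; rewrite !inE; case: (m =P k) => //= /eqP /flip_off ->.
by rewrite !inE flip_at; case: (x k) => /=; rewrite ?add0n ?add1n /= ?negbK.
Qed.

Lemma adj_odd x y : adj x y -> oddv y = evenv x.
Proof. by case/adjP => k ->; rewrite oddv_flip. Qed.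

Lemma cwC (C : numClosedFieldType) (c : vtx n -> vtx n -> C) x y :
  adj x y -> cw c x y = cw c y x.
Proof.
move=> hxy; have := adj_odd hxy; rewrite /cw /evenv -/(oddv y) -/(oddv x).
by case: (oddv x); case: (oddv y).
Qed.

Lemma flip2 y a b p q : a != b -> flip (flip y a) p = flip (flip y b) q ->
  (p = a /\ q = b) \/ (p = b /\ q = a).
Proof.
move=> ab E.
have ba : (b == a) = false by rewrite eq_sym; apply/negbTE.
have ab' : (a == b) = false by apply/negbTE.
case: (p =P a) => [pa|pa].
  subst p; left; split => //; move: E; rewrite flipK => /ffunP /(_ b).
  case: (q =P b) => // qb; have bq : (b == q) = false by apply/eqP => h; apply: qb.
  by rewrite !flipE eqxx bq; case: (y b).
have ap : (a == p) = false by apply/eqP => h; apply: pa.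
case: (q =P a) => [qa|qa]; last first.
  have aq : (a == q) = false by apply/eqP => h; apply: qa.
  move/ffunP: E => /(_ a); rewrite !flipE ap aq eqxx ab'.
  by case: (y a).
subst q; right; split => //.
case: (p =P b) => // pb; have bp : (b == p) = false by apply/eqP => h; apply: pb.
move/ffunP: E => /(_ b); rewrite !flipE bp ba eqxx.
by case: (y b).
Qed.

Lemma common_nb x1 x2 y1 y2 i : x1 != x2 -> y1 != y2 ->
  adj x1 y1 -> adj x2 y1 -> adj x1 y2 -> adj x2 y2 ->
  adj x1 i -> adj x2 i -> (i == y1) || (i == y2).
Proof.
move=> x12 y12; rewrite ![adj _ y1]adj_sym.
case/adjP => a ha; subst x1; case/adjP => b hb; subst x2.
have ab : a != b by apply: contraNneq x12 => ->.
have key : forall z, adj (flip y1 a) z -> adj (flip y1 b) z ->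
    z = y1 \/ z = flip (flip y1 a) b.
  move=> z /adjP[p ->] /adjP[q] E.
  by case: (flip2 ab E) => -[-> _]; [left; rewrite flipK | right].
move=> /key h1 /h1 {h1} [ey2|ey2]; first by rewrite ey2 eqxx in y12.
by move=> /key h1 /h1 {h1} [->|->]; rewrite ?ey2 eqxx ?orbT.
Qed.


Lemma sum2 (R : nmodType) (F : vtx n -> R) x1 x2 y1 y2 : x1 != x2 -> y1 != y2 ->
  adj x1 y1 -> adj x2 y1 -> adj x1 y2 -> adj x2 y2 ->
  \sum_(i | adj x1 i && adj x2 i) F i = F y1 + F y2.
Proof.
move=> x12 y12 a11 a21 a12 a22.
rewrite (bigD1 y1) ?a11 ?a21 //= (bigD1 y2) /=; last by rewrite a12 a22 eq_sym y12.
rewrite big1 ?addr0 // => i /andP[/andP[/andP[h1 h2] n1] n2].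
by have := common_nb x12 y12 a11 a21 a12 a22 h1 h2; rewrite (negbTE n1) (negbTE n2).
Qed.

End Basics.
Lemma alg1 (C : numClosedFieldType) (e f g h : C) :
  e != 0 -> f != 0 -> e * f^* + h * g^* = 0 -> h != 0 /\ g != 0.
Proof.
move=> e0 f0 E.
have : e * f^* != 0 by rewrite mulf_neq0 // conjC_eq0.
move: E; by case: (h =P 0) => [->|/eqP h0]; case: (g =P 0) => [->|/eqP g0];
  rewrite ?rmorph0 ?mulr0 ?mul0r ?addr0 => // ->; rewrite eqxx.
Qed.

Lemma alg2 (C : numClosedFieldType) (e f g h : C) :
  e != 0 -> f != 0 -> g != 0 -> h != 0 ->
  e * f^* + h * g^* = 0 -> e * h^* + f * g^* = 0 ->
  [/\ e / f = - (g / h)^*, `|e| = `|g| & `|f| = `|h|].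
Proof.
move=> e0 f0 g0 h0 E1 E2.
have F1 : e * f^* = - (h * g^*) by rewrite -(addr0_eq E1) opprK.
have F2 : e * h^* = - (f * g^*) by rewrite -(addr0_eq E2) opprK.
have E1' : `|e| * `|f| = `|h| * `|g|.
  by rewrite -(norm_conjC f) -(norm_conjC g) -!normrM F1 normrN.
have E2' : `|e| * `|h| = `|f| * `|g|.
  by rewrite -(norm_conjC h) -(norm_conjC g) -!normrM F2 normrN.
have FH : `|f| = `|h|.
  have : `|h| ^+ 2 * `|g| = `|f| ^+ 2 * `|g|.
    by rewrite !expr2 -!mulrA -E1' -E2' mulrCA [RHS]mulrCA (mulrC `|h|).
  have gn : `|g| != 0 by rewrite normr_eq0.
  by move/(mulIf gn)/eqP; rewrite eqrXn2 // => /eqP.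
split => //; last first.
  by apply: (mulIf (x := `|f|)); rewrite ?normr_eq0 // E1' FH mulrC.
rewrite fmorph_div; apply/eqP; rewrite -mulNr eqr_div ?conjC_eq0 //.
by rewrite F2 mulNr mulrC.
Qed.

Lemma part1 n (C : numClosedFieldType) (c : vtx n -> vtx n -> C) (hc : admissible c) :
  forall x1 x2 y1 y2 : vtx n,
     x1 != x2 -> y1 != y2 ->
     adj x1 y1 -> adj y1 x2 -> adj x2 y2 -> adj y2 x1 ->
     cw c x1 y1 != 0 -> cw c y1 x2 != 0 ->
     [/\ cw c x2 y2 != 0, cw c y2 x1 != 0,
         cw c x1 y1 / cw c y1 x2 = - (cw c x2 y2 / cw c y2 x1)^*,
         `|cw c x1 y1| = `|cw c x2 y2| &
         `|cw c y1 x2| = `|cw c y2 x1|].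
Proof.
move=> x1 x2 y1 y2 x12 y12 a11 a12 a22 a21.
rewrite adj_sym in a12; rewrite adj_sym in a21.
have b11 : adj y1 x1 by rewrite adj_sym.
have b12 : adj y1 x2 by rewrite adj_sym.
have b21 : adj y2 x1 by rewrite adj_sym.
have b22 : adj y2 x2 by rewrite adj_sym.
have o11 := adj_odd a11; have o21 := adj_odd a12;
have o12 := adj_odd a21; have o22 := adj_odd a22.
have ex2 : evenv x2 = evenv x1.
  by move: o11 o21; rewrite /evenv -/(oddv x1) -/(oddv x2) => <- <-.
have ey : forall y : vtx n, oddv y = evenv x1 -> evenv y = ~~ evenv x1.
  by move=> y; rewrite /evenv -/(oddv y) => ->.
rewrite /cw ex2 (ey _ o11) (ey _ o12).
case ex1 : (evenv x1) => /= e0 f0.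
-
  have R1 := (proj2 hc) x1 x2.
  have U1 : Uc c x1 by split => //; exists y1; rewrite o11 ex1.
  have U2 : Uc c x2 by split; [rewrite ex2 | exists y1; rewrite o21 ex2 ex1].
  move: (R1 U1 U2); rewrite (negbTE x12) (sum2 _ x12 y12 a11 a12 a21 a22) => E1.
  have [h0 g0] := alg1 e0 f0 E1.
  have V1 : Vc c y1 by split; [rewrite o11 | exists x1; rewrite ex1].
  have V2 : Vc c y2 by split; [rewrite o12 | exists x1; rewrite ex1].
  move: ((proj1 hc) y1 y2 V1 V2); rewrite (negbTE y12).
  under eq_bigl => i do rewrite ![adj i _]adj_sym.
  rewrite (sum2 _ y12 x12 b11 b21 b12 b22) => E2.
  by have [? ? ?] := alg2 e0 f0 g0 h0 E1 E2.
-
  have ey1 : evenv y1 by rewrite (ey _ o11) ex1.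
  have ey2 : evenv y2 by rewrite (ey _ o12) ex1.
  have oddx : oddv x1 by rewrite /oddv -[odd _]negbK; move: ex1; rewrite /evenv => ->.
  have oddx2 : oddv x2 by rewrite /oddv -[odd _]negbK; move: ex1; rewrite -ex2 /evenv => ->.
  have V1 : Vc c x1 by split => //; exists y1; rewrite ey1 adj_sym.
  have V2 : Vc c x2 by split => //; exists y1; rewrite ey1 adj_sym.
  move: ((proj1 hc) x1 x2 V1 V2); rewrite (negbTE x12).
  under eq_bigl => i do rewrite ![adj i _]adj_sym.
  rewrite (sum2 _ x12 y12 a11 a12 a21 a22) => E1.
  have [h0 g0] := alg1 e0 f0 E1.
  have U1 : Uc c y1 by split => //; exists x1; rewrite oddx adj_sym.
  have U2 : Uc c y2 by split => //; exists x1; rewrite oddx adj_sym.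
  move: ((proj2 hc) y1 y2 U1 U2); rewrite (negbTE y12).
  rewrite (sum2 _ y12 x12 b11 b21 b12 b22) => E2.
  by have [? ? ?] := alg2 e0 f0 g0 h0 E1 E2.
Qed.

Section Part3.
Variables (n : nat) (C : numClosedFieldType) (c : vtx n -> vtx n -> C).
Hypothesis hc : admissible c.

Definition Kc (x : vtx n) : {set 'I_n} := [set k | cw c x (flip x k) != 0].

Lemma K_sub x a : a \in Kc x -> Kc x \subset Kc (flip x a).
Proof.
rewrite inE => ha; apply/subsetP => b; rewrite !inE => hb.
case: (b =P a) => [->|/eqP ba]; first by rewrite flipK cwC // adj_sym adj_flip.
have ab : a != b by rewrite eq_sym.
have x12 : flip x a != flip x b.
  by apply/eqP => /ffunP /(_ a); rewrite !flipE eqxx (negbTE ab); case: (x a).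
have y12 : x != flip (flip x a) b.
  by apply/eqP => /ffunP /(_ a); rewrite !flipE eqxx (negbTE ab); case: (x a).
have e1 : adj (flip x a) x by rewrite adj_sym adj_flip.
have e3 : adj (flip x b) (flip (flip x a) b) by rewrite flipC adj_flip.
have e4 : adj (flip (flip x a) b) (flip x a) by rewrite adj_sym adj_flip.
have c1 : cw c (flip x a) x != 0 by rewrite cwC.
have [_ h _ _ _] := part1 hc x12 y12 e1 (adj_flip x b) e3 e4 c1 hb.
by rewrite cwC // adj_sym.
Qed.

Lemma K_flip x a : a \in Kc x -> Kc (flip x a) = Kc x.
Proof.
move=> ha; apply/eqP; rewrite eqEsubset K_sub // andbT.
have ha' : a \in Kc (flip x a) by apply: (subsetP (K_sub ha)).
by have := K_sub ha'; rewrite flipK.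
Qed.

Lemma subcubeP (K : {set 'I_n}) (a v : vtx n) :
  reflect (forall k, k \notin K -> v k = a k) (v \in subcube K a).
Proof.
rewrite inE; apply: (iffP forallP) => h k.
  by move=> hk; apply/eqP; move: (h k); rewrite hk.
by apply/implyP => /h ->.
Qed.

Lemma subcube_self (K : {set 'I_n}) (a : vtx n) : a \in subcube K a.
Proof. by apply/subcubeP. Qed.

Lemma Kconst x y : y \in subcube (Kc x) x -> Kc y = Kc x.
Proof.
move Hd : #|[set k | y k != x k]| => d.
elim: d y Hd => [|d IH] y Hd hy.
  have -> // : y = x.
  apply/ffunP => k; apply/eqP; apply: negbNE; apply/negP => hk.
  by move/eqP: Hd; rewrite cards_eq0 => /eqP /setP /(_ k); rewrite !inE hk.
have [k hk] : exists k, k \in [set k | y k != x k].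
  by apply/set0Pn; rewrite -cards_eq0 Hd.
have kK : k \in Kc x.
  apply: contraT => kn; move: hk; rewrite inE (subcubeP _ _ _ hy) ?eqxx //.
have hy' : flip y k \in subcube (Kc x) x.
  apply/subcubeP => m hm; rewrite flip_off; first exact: (subcubeP _ _ _ hy).
  by apply: contraNneq hm => ->.
have Hd' : #|[set m | flip y k m != x m]| = d.
  have -> : [set m | flip y k m != x m] = [set m | y m != x m] :\ k.
    apply/setP => m; rewrite !inE flipE; case: (m =P k) => [->|] //=.
    by move: hk; rewrite inE; case: (y k); case: (x k).
  by move: Hd; rewrite (cardsD1 k) hk add1n => -[].
have E := IH _ Hd' hy'.
have kK' : k \in Kc (flip y k) by rewrite E.
by rewrite -E -{1}(flipK y k) K_flip.
Qed.

Lemma Ssame x y : y \in subcube (Kc x) x -> subcube (Kc y) y = subcube (Kc x) x.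
Proof.
move=> hy; rewrite (Kconst hy); apply/setP => v.
apply/subcubeP/subcubeP => h k hk; rewrite h //; first by rewrite (subcubeP _ _ _ hy).
by rewrite (subcubeP _ _ _ hy).
Qed.

Lemma supp x : Uc c x \/ Vc c x <-> Kc x != set0.
Proof.
split.
- case=> [[ev [j [oj /adjP [k ->] cj]]] | [od [i [ei /adjP [k hk] ci]]]];
    apply/set0Pn; exists k; rewrite inE.
  + by rewrite /cw ev.
  + have hi : flip x k = i by rewrite hk flipK.
    by rewrite hi /cw /evenv -/(oddv x) od.
- case/set0Pn => k; rewrite inE /cw; case ev: (evenv x) => ck.
  + left; split => //; exists (flip x k); split => //; last exact: adj_flip.
    by rewrite oddv_flip.
  + right; split; first by move: ev; rewrite /evenv /oddv; case: odd.
    exists (flip x k); split => //; last by rewrite adj_sym adj_flip.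
    rewrite /evenv -/(oddv _) oddv_flip; move: ev; rewrite /evenv /oddv.
    by case: odd.
Qed.

Lemma part3 : disjoint_union_of_subcubes c.
Proof.
exists [set subcube (Kc x) x | x in [set x | Kc x != set0]]; split.
- by move=> B /imsetP [x _ ->]; exists (Kc x), x.
- apply/trivIsetP => A B /imsetP [x _ ->] /imsetP [y _ ->] neq.
  rewrite -setI_eq0; apply/eqP/setP => z; rewrite in_setI in_set0.
  apply/negP => /andP [zx zy]; move/eqP: neq; apply.
  by rewrite -(Ssame zx) -(Ssame zy).
- move=> x; rewrite cover_imset; split.
  + by move=> /supp hx; apply/bigcupP; exists x; [rewrite inE | apply: subcube_self].
  + case/bigcupP => y; rewrite inE => hy hx.
    by apply/supp; rewrite (Kconst hx).
- move=> i j ei /adjP [k ->]; have -> : c i (flip i k) = cw c i (flip i k) by rewrite /cw ei.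
  split.
  + move=> hk; have kK : k \in Kc i by rewrite inE.
    exists (subcube (Kc i) i).
      by apply/imsetP; exists i => //; rewrite inE; apply/set0Pn; exists k.
    rewrite subcube_self /=; apply/subcubeP => m hm; rewrite flip_off //.
    by apply: contraNneq hm => ->.
  + case=> B /imsetP [y _ ->] /andP [hi hj].
    rewrite -(Ssame hi) in hj.
    have : k \in Kc i.
      apply: contraT => kn; have := subcubeP _ _ _ hj k kn.
      by rewrite flip_at; case: (i k).
    by rewrite inE.
Qed.

End Part3.

Theorem lemma4p2 (C : numClosedFieldType) (n : nat) (hn : (2 <= n)%N)
  (c : vtx n -> vtx n -> C) (hc : admissible c) :
  (forall x1 x2 y1 y2 : vtx n,
     x1 != x2 -> y1 != y2 ->
     adj x1 y1 -> adj y1 x2 -> adj x2 y2 -> adj y2 x1 ->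
     cw c x1 y1 != 0 -> cw c y1 x2 != 0 ->
     [/\ cw c x2 y2 != 0, cw c y2 x1 != 0,
         cw c x1 y1 / cw c y1 x2 = - (cw c x2 y2 / cw c y2 x1)^*,
         `|cw c x1 y1| = `|cw c x2 y2| &
         `|cw c y1 x2| = `|cw c y2 x1|])
  /\ disjoint_union_of_subcubes c.
Proof. by split; [apply: part1 | apply: part3]. Qed.
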